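(* Let $S$ be an atomic and simple relation algebra with finitely many atoms, and let $\# : S\to\mathbb{N}\cup\{\infty\}$ satisfy: $\#\bot=0$; $\#x=1$ for every atom $x$; $\#x+\#y=\#(x\sqcup y)+\#(x\sqcap y)$ for all $x,y\in S$; and $\#\top=(\#1)^2$. Then $S$ is atom-rectangular, and hence representable.
   Context: A Stone relation algebra is a structure $(S,\sqcup,\sqcap,\cdot,\overline{\,\cdot\,},{}^{\smile},\bot,\top,1)$ (write $xy$ for $x\cdot y$, $\overline{x}$ for the pseudocomplement, $x^{\smile}$ for the converse) such that: $(S,\sqcup,\sqcap,\bot,\top)$ is a bounded distributive lattice with order $x\sqsubseteq y\iff x\sqcup y=y$; $x\sqcap y=\bot\iff x\sqsubseteq\overline{y}$; $\overline{x}\sqcup\overline{\overline{x}}=\top$; $\cdot$ is associative with two-sided unit $1$, distributes over $\sqcup$ on both sides, and $\bot$ is a zero of $\cdot$; $x^{\smile\smile}=x$, $(xy)^{\smile}=y^{\smile}x^{\smile}$, $(x\sqcup y)^{\smile}=x^{\smile}\sqcup y^{\smile}$; $\overline{\overline{1}}=1$; $\overline{\overline{xy}}=\overline{\overline{x}}\,\overline{\overline{y}}$; $xy\sqcap z\sqsubseteq x(y\sqcap x^{\smile}z)$. A relation algebra is a Stone relation algebra with $\overline{\overline{x}}=x$ for all $x$; it is representable if it is isomorphic to an algebra of binary relations (on some base set) with the usual relational operations. An atom is an element $x\neq\bot$ such that $\bot\neq y\sqsubseteq x$ implies $y=x$. An element $x$ is a rectangle if $x\top x\sqsubseteq x$ and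 simple if $\top x\top=\top$. $S$ is simple if every element other than $\bot$ is simple; atomic if every $x\neq\bot$ has an atom below it; atom-rectangular if every atom is a rectangle. Arithmetic in $\mathbb{N}\cup\{\infty\}$ has $n+\infty=\infty+n=\infty$ and $\infty^2=\infty$. *)

(* Defs.v *)
From Stdlib Require Import List.
Import ListNotations.

Record StoneRA : Type := {
  car :> Type;
  sup : car -> car -> car;
  inf : car -> car -> car;
  comp : car -> car -> car;
  pc : car -> car;
  cnv : car -> car;
  bot : car; top : car; one : car;
  sup_assoc : forall x y z, sup x (sup y z) = sup (sup x y) z;
  sup_comm : forall x y, sup x y = sup y x;
  inf_assoc : forall x y z, inf x (inf y z) = inf (inf x y) z;
  inf_comm : forall x y, inf x y = inf y x;
  sup_absorb : forall x y, sup x (inf x y) = x;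
  inf_absorb : forall x y, inf x (sup x y) = x;
  inf_sup_distr : forall x y z, inf x (sup y z) = sup (inf x y) (inf x z);
  sup_bot : forall x, sup x bot = x;
  inf_top : forall x, inf x top = x;
  pc_spec : forall x y, inf x y = bot <-> sup x (pc y) = pc y;
  stone : forall x, sup (pc x) (pc (pc x)) = top;
  comp_assoc : forall x y z, comp x (comp y z) = comp (comp x y) z;
  comp_one_l : forall x, comp one x = x;
  comp_one_r : forall x, comp x one = x;
  comp_sup_l : forall x y z, comp (sup x y) z = sup (comp x z) (comp y z);
  comp_sup_r : forall x y z, comp x (sup y z) = sup (comp x y) (comp x z);
  comp_bot_l : forall x, comp bot x = bot;
  comp_bot_r : forall x, comp x bot = bot;
  cnv_invol : forall x, cnv (cnv x) = x;
  cnv_comp : forall x y, cnv (comp x y) = comp (cnv y) (cnv x);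
  cnv_sup : forall x y, cnv (sup x y) = sup (cnv x) (cnv y);
  pc_pc_one : pc (pc one) = one;
  pc_pc_comp : forall x y, pc (pc (comp x y)) = comp (pc (pc x)) (pc (pc y));
  dedekind : forall x y z,
    sup (inf (comp x y) z) (comp x (inf y (comp (cnv x) z)))
    = comp x (inf y (comp (cnv x) z))
}.

Section Defs.
Variable S : StoneRA.

Definition le (x y : S) : Prop := sup S x y = y.

Definition is_relation_algebra : Prop := forall x : S, pc S (pc S x) = x.

Definition atom (x : S) : Prop :=
  x <> bot S /\ forall y : S, y <> bot S -> le y x -> y = x.

Definition rectangle (x : S) : Prop := le (comp S (comp S x (top S)) x) x.

Definition simple_elt (x : S) : Prop := comp S (comp S (top S) x) (top S) = top S.

Definition simple_alg : Prop := forall x : S, x <> bot S -> simple_elt x.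

Definition atomic : Prop := forall x : S, x <> bot S -> exists a, atom a /\ le a x.

Definition atom_rectangular : Prop := forall x : S, atom x -> rectangle x.

Definition finitely_many_atoms : Prop := exists l : list S, forall a, atom a -> In a l.

(** Representability: an injective homomorphism into an algebra of binary
    relations on a base set X, whose top element is some relation E
    (necessarily an equivalence relation), with the usual relational operations
    (complement taken relative to E). *)
Definition representable : Prop :=
  exists (X : Type) (E : X -> X -> Prop) (f : S -> X -> X -> Prop),
    (forall x y, (forall a b, f x a b <-> f y a b) -> x = y) /\
    (forall x y a b, f (sup S x y) a b <-> (f x a b \/ f y a b)) /\
    (forall x y a b, f (inf S x y) a b <-> (f x a b /\ f y a b)) /\
    (forall x y a b, f (comp S x y) a b <-> exists c, f x a c /\ f y c b) /\
    (forall x a b, f (pc S x) a b <-> (E a b /\ ~ f x a b)) /\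
    (forall x a b, f (cnv S x) a b <-> f x b a) /\
    (forall a b, f (bot S) a b <-> False) /\
    (forall a b, f (top S) a b <-> E a b) /\
    (forall a b, f (one S) a b <-> (a = b /\ E a b)).

End Defs.

Inductive natinf : Type := Fin (n : nat) | Inf.

Definition ni_add (m n : natinf) : natinf :=
  match m, n with Fin a, Fin b => Fin (a + b) | _, _ => Inf end.

Definition ni_sq (m : natinf) : natinf :=
  match m with Fin a => Fin (a * a) | Inf => Inf end.

(* Main.v *)
Require Import Defs.
From Stdlib Require Import List Classical ProofIrrelevance Lia.
Import ListNotations.

Arguments sup {s}. Arguments inf {s}. Arguments comp {s}. Arguments pc {s}.
Arguments cnv {s}. Arguments bot {s}. Arguments top {s}. Arguments one {s}.
Arguments le {S}. Arguments atom {S}.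

Lemma sup_idem {S : StoneRA} (x : S) : sup x x = x.
Proof. rewrite <- (inf_absorb S x x) at 2. apply sup_absorb. Qed.
Lemma inf_idem {S : StoneRA} (x : S) : inf x x = x.
Proof. rewrite <- (sup_idem x) at 2. apply inf_absorb. Qed.
Lemma le_refl {S : StoneRA} (x : S) : le x x.
Proof. apply sup_idem. Qed.
Lemma le_trans {S : StoneRA} (x y z : S) : le x y -> le y z -> le x z.
Proof. unfold le; intros H1 H2. rewrite <- H2, sup_assoc, H1. reflexivity. Qed.
Lemma le_antisym {S : StoneRA} (x y : S) : le x y -> le y x -> x = y.
Proof. unfold le; intros H1 H2. rewrite <- H1, sup_comm. symmetry. exact H2. Qed.
Lemma le_inf {S : StoneRA} (x y : S) : le x y <-> inf x y = x.
Proof. unfold le; split; intro H.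
- rewrite <- H. apply inf_absorb.
- rewrite <- H, sup_comm, inf_comm. apply sup_absorb. Qed.
Lemma le_supl {S : StoneRA} (x y : S) : le x (sup x y).
Proof. unfold le. rewrite sup_assoc, sup_idem. reflexivity. Qed.
Lemma le_supr {S : StoneRA} (x y : S) : le y (sup x y).
Proof. rewrite sup_comm. apply le_supl. Qed.
Lemma le_infl {S : StoneRA} (x y : S) : le (inf x y) x.
Proof. apply le_inf. rewrite (inf_comm _ (inf x y) x), inf_assoc, inf_idem. reflexivity. Qed.
Lemma le_infr {S : StoneRA} (x y : S) : le (inf x y) y.
Proof. rewrite inf_comm. apply le_infl. Qed.
Lemma sup_lub {S : StoneRA} (x y z : S) : le x z -> le y z -> le (sup x y) z.
Proof. unfold le; intros H1 H2. rewrite <- sup_assoc, H2, H1. reflexivity. Qed.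
Lemma inf_glb {S : StoneRA} (x y z : S) : le z x -> le z y -> le z (inf x y).
Proof. rewrite !le_inf; intros H1 H2. rewrite inf_assoc, H1, H2. reflexivity. Qed.
Lemma le_bot {S : StoneRA} (x : S) : le bot x.
Proof. unfold le. rewrite sup_comm. apply sup_bot. Qed.
Lemma le_top {S : StoneRA} (x : S) : le x top.
Proof. apply le_inf. apply inf_top. Qed.
Lemma le_bot_eq {S : StoneRA} (x : S) : le x bot -> x = bot.
Proof. intro H. apply le_antisym; auto using le_bot. Qed.
Lemma inf_bot {S : StoneRA} (x : S) : inf x bot = bot.
Proof. rewrite inf_comm. apply le_inf, le_bot. Qed.
Lemma le_mono_inf {S : StoneRA} (x y z : S) : le x y -> le (inf x z) (inf y z).
Proof. intro H. apply inf_glb. eapply le_trans; [apply le_infl|exact H]. apply le_infr. Qed.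

Lemma inf_pc {S : StoneRA} (x : S) : inf x (pc x) = bot.
Proof. rewrite inf_comm. apply pc_spec. apply le_refl. Qed.

Lemma comp_mono_r {S : StoneRA} (z x y : S) : le x y -> le (comp z x) (comp z y).
Proof. unfold le; intro H. rewrite <- comp_sup_r, H. reflexivity. Qed.
Lemma comp_mono_l {S : StoneRA} (z x y : S) : le x y -> le (comp x z) (comp y z).
Proof. unfold le; intro H. rewrite <- comp_sup_l, H. reflexivity. Qed.
Lemma comp_mono {S : StoneRA} (x y x' y' : S) : le x x' -> le y y' -> le (comp x y) (comp x' y').
Proof. intros. eapply le_trans; [apply comp_mono_l; eassumption| apply comp_mono_r; assumption]. Qed.
Lemma cnv_mono {S : StoneRA} (x y : S) : le x y -> le (cnv x) (cnv y).
Proof. unfold le; intro H. rewrite <- cnv_sup, H. reflexivity. Qed.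
Lemma cnv_le {S : StoneRA} (x y : S) : le x (cnv y) -> le (cnv x) y.
Proof. intro H. rewrite <- (cnv_invol S y). apply cnv_mono, H. Qed.
Lemma cnv_bot {S : StoneRA} : cnv (@bot S) = bot.
Proof. apply le_bot_eq. apply cnv_le. apply le_bot. Qed.
Lemma cnv_top {S : StoneRA} : cnv (@top S) = top.
Proof. apply le_antisym. apply le_top. rewrite <- (cnv_invol S top) at 1. apply cnv_mono, le_top. Qed.
Lemma cnv_one {S : StoneRA} : cnv (@one S) = one.
Proof. transitivity (comp (cnv (cnv (@one S))) (cnv one)).
  rewrite cnv_invol, comp_one_l. reflexivity.
  rewrite <- cnv_comp, comp_one_l. apply cnv_invol. Qed.
Lemma cnv_inf {S : StoneRA} (x y : S) : cnv (inf x y) = inf (cnv x) (cnv y).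
Proof. apply le_antisym.
- apply inf_glb; apply cnv_mono; [apply le_infl|apply le_infr].
- rewrite <- (cnv_invol S (inf (cnv x) (cnv y))). apply cnv_mono.
  apply inf_glb; apply cnv_le; [apply le_infl|apply le_infr]. Qed.

Lemma sub_cnv_le {S : StoneRA} (p : S) : le p one -> le p (cnv p).
Proof. intro H.
  assert (D := dedekind S p one p). rewrite comp_one_r, inf_idem in D.
  eapply le_trans. exact D.
  eapply le_trans. apply comp_mono_r. apply le_infr.
  rewrite comp_assoc.
  apply le_trans with (comp (comp one (cnv p)) one).
  apply comp_mono; [apply comp_mono_l, H | apply H].
  rewrite comp_one_l, comp_one_r; apply le_refl. Qed.
Lemma sub_cnv {S : StoneRA} (p : S) : le p one -> cnv p = p.
Proof. intro H. apply le_antisym.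
- apply cnv_le. apply sub_cnv_le, H.
- apply sub_cnv_le, H. Qed.
Lemma sub_idem {S : StoneRA} (p : S) : le p one -> comp p p = p.
Proof. intro H. apply le_antisym.
- rewrite <- (comp_one_r S p) at 3. apply comp_mono_r, H.
- assert (D := dedekind S p one p). rewrite comp_one_r, inf_idem in D.
  eapply le_trans. exact D. apply comp_mono_r.
  eapply le_trans. apply le_infr. rewrite (sub_cnv p H).
  rewrite <- (comp_one_r S p) at 3. apply comp_mono_r, H. Qed.
Lemma sub_comp_le {S : StoneRA} (p q : S) : le p one -> le q one -> le (comp p q) (inf p q).
Proof. intros Hp Hq. apply inf_glb.
- rewrite <- (comp_one_r S p) at 2. apply comp_mono_r, Hq.
- rewrite <- (comp_one_l S q) at 2. apply comp_mono_l, Hp. Qed.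

Lemma sup_pc {S : StoneRA} (RA : is_relation_algebra S) (x : S) : sup x (pc x) = top.
Proof. rewrite <- (stone S x), RA, sup_comm. reflexivity. Qed.
Lemma disj_le {S : StoneRA} (RA : is_relation_algebra S) (x y : S) : inf x (pc y) = bot -> le x y.
Proof. intro H. apply pc_spec in H. rewrite RA in H. exact H. Qed.
Lemma split_le {S : StoneRA} (RA : is_relation_algebra S) (a x : S) : le a x -> x = sup a (inf x (pc a)).
Proof. intro H. rewrite <- (inf_top S x) at 1. rewrite <- (sup_pc RA a), inf_sup_distr.
  rewrite inf_comm. apply le_inf in H. rewrite H. reflexivity. Qed.
Lemma atom_meet {S : StoneRA} (a x : S) : atom a -> inf a x <> bot -> le a x.
Proof. intros [Ha Hm] H. apply le_inf. apply Hm. exact H. apply le_infl. Qed.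
Lemma atom_disj {S : StoneRA} (a x : S) : atom a -> ~ le a x -> inf a x = bot.
Proof. intros Ha H. destruct (classic (inf a x = bot)) as [E|E]; auto.
  exfalso. apply H. apply atom_meet; auto. Qed.
Lemma nonbot_le {S : StoneRA} (a x : S) : le a x -> a <> bot -> x <> bot.
Proof. intros H1 H2 E. subst. apply H2. apply le_bot_eq, H1. Qed.
Lemma atom_le_atom {S : StoneRA} (a b : S) : atom b -> a <> bot -> le a b -> a = b.
Proof. intros [_ Hb] H1 H2. apply Hb; auto. Qed.

Fixpoint bigsup {S : StoneRA} (l : list S) : S :=
  match l with [] => bot | a :: l => sup a (bigsup l) end.

Lemma bs_in {S : StoneRA} (l : list S) e : In e l -> le e (bigsup l).
Proof. induction l as [|a l IH]; simpl; [tauto|]. intros [<-|H].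
  apply le_supl. eapply le_trans. apply IH, H. apply le_supr. Qed.
Lemma bs_lub {S : StoneRA} (l : list S) z : (forall e, In e l -> le e z) -> le (bigsup l) z.
Proof. induction l as [|a l IH]; simpl; intro H. apply le_bot.
  apply sup_lub; auto. Qed.
Lemma bs_inf_bot {S : StoneRA} (l : list S) x : (forall e, In e l -> inf x e = bot) -> inf x (bigsup l) = bot.
Proof. induction l as [|a l IH]; simpl; intro H. apply inf_bot.
  rewrite inf_sup_distr, H, IH; auto. apply sup_bot. Qed.
Lemma bs_comp_l {S : StoneRA} (l : list S) z : comp (bigsup l) z = bigsup (map (fun e => comp e z) l).
Proof. induction l as [|a l IH]; simpl. apply comp_bot_l. rewrite comp_sup_l, IH. reflexivity. Qed.
Lemma bs_comp_r {S : StoneRA} (l : list S) z : comp z (bigsup l) = bigsup (map (fun e => comp z e) l).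
Proof. induction l as [|a l IH]; simpl. apply comp_bot_r. rewrite comp_sup_r, IH. reflexivity. Qed.
Lemma bs_nonbot {S : StoneRA} (l : list S) : bigsup l <> bot -> exists e, In e l /\ e <> bot.
Proof. intro H. apply NNPP. intro C. apply H. apply le_bot_eq, bs_lub.
  intros e He. destruct (classic (e = bot)) as [->|N]. apply le_refl.
  exfalso. apply C. eauto. Qed.
Lemma atom_bs {S : StoneRA} (l : list S) a : atom a -> le a (bigsup l) -> exists e, In e l /\ le a e.
Proof. intros Ha H. apply NNPP. intro C.
  assert (inf a (bigsup l) = bot).
  { apply bs_inf_bot. intros e He. apply atom_disj; auto. intro. apply C; eauto. }
  apply le_inf in H. rewrite H in H0. destruct Ha; auto. Qed.

Lemma list_filter_ex {A : Type} (Q : A -> Prop) (l : list A) :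
  exists P, NoDup P /\ forall a, In a P <-> (Q a /\ In a l).
Proof. induction l as [|b l IH].
- exists []. split. constructor. simpl; tauto.
- destruct IH as [P [ND HP]].
  destruct (classic (Q b /\ ~ In b P)) as [[Hq Hn]|Hc].
  + exists (b :: P). split. constructor; auto.
    intro a; simpl; rewrite HP. split.
    * intros [E|H]; subst; tauto.
    * intros [Ha [E|H]]; subst; tauto.
  + exists P. split; auto. intro a; simpl; rewrite HP. split; [tauto|].
    intros [Ha [E|H]]; [subst|tauto]. destruct (classic (In a P)) as [I|I].
    apply HP in I; tauto. exfalso; tauto. Qed.

Lemma cnt_bs {A : Type} {S : StoneRA} (cnt : S -> natinf) :
  cnt bot = Fin 0 ->
  (forall x y : S, ni_add (cnt x) (cnt y) = ni_add (cnt (sup x y)) (cnt (inf x y))) ->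
  forall (g : A -> S) (h : A -> nat) (L : list A), NoDup L ->
  (forall a b, In a L -> In b L -> a <> b -> inf (g a) (g b) = bot) ->
  (forall a, In a L -> cnt (g a) = Fin (h a)) ->
  cnt (bigsup (map g L)) = Fin (list_sum (map h L)).
Proof. intros Hbot Hadd g h L. induction L as [|a L IH]; simpl; intros ND Hd Hc.
- exact Hbot.
- inversion ND; subst.
  assert (IH' : cnt (bigsup (map g L)) = Fin (list_sum (map h L))).
  { apply IH; auto; intros; first [apply Hd|apply Hc]; simpl; auto. }
  assert (D : inf (g a) (bigsup (map g L)) = bot).
  { apply bs_inf_bot. intros e He. apply in_map_iff in He. destruct He as [b [<- Hb]].
    apply Hd; simpl; auto. intro; subst; contradiction. }
  assert (E := Hadd (g a) (bigsup (map g L))). rewrite D, Hbot, IH', Hc in E by (simpl; auto).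
  simpl in E. destruct (cnt (sup (g a) (bigsup (map g L)))); simpl in E; try discriminate.
  injection E; intros; subst. f_equal. lia. Qed.

Lemma sum_const1 {A} (L : list A) : list_sum (map (fun _ => 1) L) = length L.
Proof. induction L; simpl; auto. Qed.
Lemma sum_ge {A} (f : A -> nat) k (L : list A) : (forall a, In a L -> k <= f a) -> k * length L <= list_sum (map f L).
Proof. induction L as [|a L IH]; simpl; intros H. lia.
  assert (k <= f a) by auto. assert (k * length L <= list_sum (map f L)) by auto. lia. Qed.
Lemma sum_gt {A} (f : A -> nat) k (L : list A) a0 : (forall a, In a L -> k <= f a) -> In a0 L -> k < f a0 -> k * length L < list_sum (map f L).
Proof. induction L as [|a L IH]; simpl; intros H I Hk. contradiction.
  assert (k <= f a) by auto. assert (k * length L <= list_sum (map f L)) by (apply sum_ge; auto).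
  destruct I as [<-|I]. lia. assert (k * length L < list_sum (map f L)) by auto. lia. Qed.

Definition B {S : StoneRA} (p q : S) : S := comp (comp p top) q.

Lemma le_comp_top {S : StoneRA} (p : S) : le p (comp p top).
Proof. rewrite <- (comp_one_r S p) at 1. apply comp_mono_r, le_top. Qed.

Lemma B_nonbot {S : StoneRA} (SI : simple_alg S) (p q : S) : p <> bot -> q <> bot -> B p q <> bot.
Proof. intros Hp Hq E. apply Hp. apply le_bot_eq.
  eapply le_trans. apply le_comp_top.
  assert (H := SI q Hq). unfold simple_elt in H.
  assert (E2 : comp p top = comp (B p q) top).
  { unfold B. rewrite <- H at 1. rewrite !comp_assoc. reflexivity. }
  rewrite E2, E, comp_bot_l. apply le_refl. Qed.

Lemma row_disj {S : StoneRA} (p p' : S) : le p one -> le p' one -> inf p p' = bot ->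
  inf (comp p top) (comp p' top) = bot.
Proof. intros Hp Hp' D. apply le_bot_eq.
  eapply le_trans. apply dedekind. rewrite (sub_cnv p Hp), comp_assoc.
  assert (E : comp p p' = bot) by (apply le_bot_eq; rewrite <- D; apply sub_comp_le; auto).
  rewrite E, comp_bot_l, inf_bot, comp_bot_r. apply le_refl. Qed.

Lemma col_disj {S : StoneRA} (q q' : S) : le q one -> le q' one -> inf q q' = bot ->
  inf (comp top q) (comp top q') = bot.
Proof. intros Hq Hq' D.
  rewrite <- (cnv_invol S (inf _ _)), cnv_inf, !cnv_comp, cnv_top, (sub_cnv q Hq), (sub_cnv q' Hq').
  rewrite row_disj; auto. apply cnv_bot. Qed.

Lemma B_le_row {S : StoneRA} (p q : S) : le q one -> le (B p q) (comp p top).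
Proof. intros. unfold B. rewrite <- (comp_one_r S (comp p top)) at 2. apply comp_mono_r; auto. Qed.
Lemma B_le_col {S : StoneRA} (p q : S) : le p one -> le (B p q) (comp top q).
Proof. intros. unfold B. apply comp_mono_l. rewrite <- (comp_one_l S top) at 2. apply comp_mono_l; auto. Qed.

Lemma B_disj {S : StoneRA} (p q p' q' : S) : le p one -> le q one -> le p' one -> le q' one ->
  (inf p p' = bot \/ inf q q' = bot) -> inf (B p q) (B p' q') = bot.
Proof. intros Hp Hq Hp' Hq' [D|D]; apply le_bot_eq.
- rewrite <- (row_disj p p'); auto. apply inf_glb.
  eapply le_trans. apply le_infl. apply B_le_row; auto.
  eapply le_trans. apply le_infr. apply B_le_row; auto.
- rewrite <- (col_disj q q'); auto. apply inf_glb.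
  eapply le_trans. apply le_infl. apply B_le_col; auto.
  eapply le_trans. apply le_infr. apply B_le_col; auto. Qed.

Lemma B_rect {S : StoneRA} (p q : S) : le (comp (comp (B p q) top) (B p q)) (B p q).
Proof. unfold B.
  assert (E : comp (comp (comp (comp p top) q) top) (comp (comp p top) q)
    = comp p (comp (comp (comp top (comp q (comp top p))) top) q)) by (rewrite !comp_assoc; reflexivity).
  rewrite E. rewrite <- (comp_assoc S p top q). apply comp_mono_r, comp_mono_l, le_top. Qed.

Lemma B_cnv {S : StoneRA} (p q : S) : le p one -> le q one -> cnv (B p q) = B q p.
Proof. intros. unfold B. rewrite !cnv_comp, cnv_top, (sub_cnv p H), (sub_cnv q H0). rewrite comp_assoc. reflexivity. Qed.

Lemma atom_sup {S : StoneRA} (a x y : S) : atom a -> (le a (sup x y) <-> le a x \/ le a y).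
Proof. intros Ha. split.
- intro H. destruct (classic (le a x)) as [H1|H1]; auto. right.
  apply atom_disj in H1; auto. apply le_inf in H. rewrite inf_sup_distr, H1 in H.
  rewrite sup_comm, sup_bot in H. apply le_inf, H.
- intros [H|H]; eapply le_trans; eauto using le_supl, le_supr. Qed.

Lemma blocks_atoms (S : StoneRA) (cnt : S -> natinf) :
  is_relation_algebra S -> atomic S -> simple_alg S ->
  cnt bot = Fin 0 ->
  (forall x : S, atom x -> cnt x = Fin 1) ->
  (forall x y : S, ni_add (cnt x) (cnt y) = ni_add (cnt (sup x y)) (cnt (inf x y))) ->
  cnt top = ni_sq (cnt one) ->
  forall P : list S, NoDup P -> (forall p, In p P <-> atom p /\ le p one) ->
  one = bigsup P ->
  forall p q, In p P -> In q P -> atom (B p q).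
Proof.
  intros RA AT SI Hbot Hat Hadd Htop P ND HP Hone.
  assert (Pdisj : forall p q, In p P -> In q P -> p <> q -> inf p q = bot).
  { intros p q Hp Hq Hne. apply HP in Hp. apply HP in Hq.
    apply NNPP; intro C. apply Hne. apply atom_le_atom; try tauto.
    apply proj1 in Hp; destruct Hp; auto.
    apply atom_meet; tauto. }
  assert (C1 : cnt one = Fin (length P)).
  { rewrite Hone. rewrite <- (map_id P) at 1. rewrite <- sum_const1.
    apply cnt_bs; auto. intros a Ha. apply Hat, HP, Ha. }
  set (n := length P) in *.
  assert (Ctop : cnt top = Fin (n * n)) by (rewrite Htop, C1; reflexivity).
  set (N := fun x => match cnt x with Fin k => k | Inf => 0 end).
  assert (Cfin : forall x, cnt x = Fin (N x)).
  { intro x. assert (E := Hadd x (pc x)). rewrite sup_pc, inf_pc, Ctop, Hbot in E by auto.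
    unfold N. destruct (cnt x); simpl in E; [reflexivity|discriminate]. }
  assert (Nadd : forall x y, inf x y = bot -> N (sup x y) = N x + N y).
  { intros x y D. assert (E := Hadd x y). rewrite D, Hbot, !Cfin in E. simpl in E.
    injection E. lia. }
  assert (Npos : forall x, x <> bot -> 1 <= N x).
  { intros x Hx. destruct (AT x Hx) as [a [Ha Hax]].
    rewrite (split_le RA a x Hax), Nadd. assert (E := Cfin a). rewrite Hat in E by auto.
    injection E; intros <-. lia.
    apply le_bot_eq. rewrite <- (inf_pc a). apply inf_glb. apply le_infl.
    eapply le_trans. apply le_infr. apply le_infr. }
  assert (Natom : forall x, x <> bot -> N x = 1 -> atom x).
  { intros x Hx H1. split; auto. intros y Hy Hyx.
    assert (E := split_le RA y x Hyx). rewrite E in H1. rewrite Nadd in H1.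
    assert (1 <= N y) by auto.
    assert (R : inf x (pc y) = bot).
    { apply NNPP. intro C. apply Npos in C. lia. }
    apply le_antisym; auto. apply disj_le; auto.
    apply le_bot_eq. rewrite <- (inf_pc y). apply inf_glb. apply le_infl.
    eapply le_trans. apply le_infr. apply le_infr. }
  assert (Psub : forall p, In p P -> le p one) by (intros p Hp; apply HP, Hp).
  assert (Pnb : forall p, In p P -> p <> bot) by (intros p Hp; apply HP, Hp).
  assert (Prow : forall p, In p P -> comp p top = bigsup (map (B p) P)).
  { intros p Hp. rewrite <- (comp_one_r S (comp p top)), Hone, bs_comp_r. reflexivity. }
  assert (Ptop : (top : S) = bigsup (map (fun p => comp p top) P)).
  { rewrite <- (comp_one_l S top), Hone at 1. rewrite bs_comp_l. reflexivity. }
  assert (Nrow : forall p, In p P -> N (comp p top) = list_sum (map (fun q => N (B p q)) P)).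
  { intros p Hp. assert (E : cnt (comp p top) = Fin (list_sum (map (fun q => N (B p q)) P))).
    { rewrite Prow by auto. apply cnt_bs; auto.
      intros a b Ha Hb Hne. apply B_disj; auto.
    }
    rewrite Cfin in E. injection E; auto. }
  assert (Ntop : N top = list_sum (map (fun p => N (comp p top)) P)).
  { assert (E : cnt top = Fin (list_sum (map (fun p => N (comp p top)) P))).
    { rewrite Ptop at 1. apply cnt_bs; auto.
      intros a b Ha Hb Hne. apply row_disj; auto. }
    rewrite Cfin in E. injection E; auto. }
  assert (NT : N top = n * n) by (rewrite Cfin in Ctop; injection Ctop; auto).
  intros p q Hp Hq. apply Natom. apply B_nonbot; auto.
  assert (1 <= N (B p q)) by (apply Npos, B_nonbot; auto).
  destruct (classic (N (B p q) = 1)) as [e|e]; auto. exfalso.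
  assert (Hr : forall p', In p' P -> n <= N (comp p' top)).
  { intros p' Hp'. rewrite Nrow by auto. replace n with (1 * length P) by (unfold n; lia).
    apply sum_ge. intros; apply Npos, B_nonbot; auto. }
  assert (Hr0 : n < N (comp p top)).
  { rewrite Nrow by auto. replace n with (1 * length P) by (unfold n; lia).
    apply sum_gt with q; auto. intros; apply Npos, B_nonbot; auto. lia. }
  assert (n * length P < list_sum (map (fun p => N (comp p top)) P)) by (apply sum_gt with p; auto).
  fold n in H0. lia.
Qed.
Lemma main_aux (S : StoneRA) (cnt : S -> natinf) :
  is_relation_algebra S ->
  atomic S ->
  simple_alg S ->
  finitely_many_atoms S ->
  cnt bot = Fin 0 ->
  (forall x : S, atom x -> cnt x = Fin 1) ->
  (forall x y : S, ni_add (cnt x) (cnt y) = ni_add (cnt (sup x y)) (cnt (inf x y))) ->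
  cnt top = ni_sq (cnt one) ->
  atom_rectangular S /\ representable S.
Proof.
  intros RA AT SI [l Hl] Hbot Hat Hadd Htop.
  destruct (list_filter_ex (fun p => atom p /\ le p one) l) as [P [ND HP0]].
  assert (HP : forall p, In p P <-> atom p /\ le p one).
  { intro p. rewrite HP0. split; [tauto|]. intros [H1 H2]; auto. }
  assert (Psub : forall p, In p P -> le p one) by (intros p Hp; apply HP, Hp).
  assert (Pnb : forall p, In p P -> p <> bot) by (intros p Hp; apply HP, Hp).
  assert (Hone : one = bigsup P).
  { apply le_antisym; [|apply bs_lub; auto].
    apply disj_le; auto. apply NNPP. intro C. destruct (AT _ C) as [a [Ha Hle]].
    assert (a1 : le a one) by (eapply le_trans; [exact Hle|apply le_infl]).
    assert (In a P) by (apply HP; auto).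
    apply (proj1 Ha). apply le_bot_eq. rewrite <- (inf_pc (bigsup P)). apply inf_glb.
    apply bs_in; auto. eapply le_trans; [exact Hle|apply le_infr]. }
  assert (Hblk := blocks_atoms S cnt RA AT SI Hbot Hat Hadd Htop P ND HP Hone).
  assert (Pdisj : forall p q, In p P -> In q P -> p <> q -> inf p q = bot).
  { intros p q Hp Hq Hne. apply HP in Hp. apply HP in Hq.
    apply NNPP; intro C. apply Hne. apply atom_le_atom; try tauto.
    apply proj1 in Hp; destruct Hp; auto.
    apply atom_meet; tauto. }
  assert (Prow : forall p, In p P -> comp p top = bigsup (map (B p) P)).
  { intros p Hp. rewrite <- (comp_one_r S (comp p top)), Hone, bs_comp_r. reflexivity. }
  assert (Ptop : (top : S) = bigsup (map (fun p => comp p top) P)).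
  { rewrite <- (comp_one_l S top), Hone at 1. rewrite bs_comp_l. reflexivity. }
  assert (Hab : forall x, atom x -> exists p q, In p P /\ In q P /\ x = B p q).
  { intros x Hx. assert (Hxt : le x (bigsup (map (fun p => comp p top) P))) by (rewrite <- Ptop; apply le_top).
    destruct (atom_bs _ x Hx Hxt) as [e [He Hxe]].
    apply in_map_iff in He. destruct He as [p [<- Hp]].
    rewrite Prow in Hxe by auto. destruct (atom_bs _ x Hx Hxe) as [e [He Hxe']].
    apply in_map_iff in He. destruct He as [q [<- Hq]].
    exists p, q. split; auto. split; auto. apply atom_le_atom; auto. apply Hx. }
  split.
  { intros x Hx. destruct (Hab x Hx) as [p [q [_ [_ ->]]]]. apply B_rect. }
  set (X := {p : S | atom p /\ le p one}).
  assert (XP : forall a : X, In (proj1_sig a) P) by (intro a; apply HP, (proj2_sig a)).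
  assert (Bnb : forall p q, In p P -> In q P -> B p q <> bot) by (intros; apply Hblk; auto).
  assert (Pidem : forall p, In p P -> comp p p = p) by (intros; apply sub_idem; auto).
  assert (Bsand : forall p q, In p P -> In q P -> B p q = comp p (comp (B p q) q)).
  { intros p q Hp Hq. unfold B. rewrite !comp_assoc. rewrite Pidem by auto.
    rewrite <- (comp_assoc S _ q q), Pidem by auto. reflexivity. }
  exists X, (fun _ _ => True), (fun x a b => le (B (proj1_sig a) (proj1_sig b)) x).
  split; [|split; [|split; [|split; [|split; [|split; [|split; [|split]]]]]]].
  -
    assert (Hle : forall x y : S, (forall a b : X, le (B (proj1_sig a) (proj1_sig b)) x <->
                                  le (B (proj1_sig a) (proj1_sig b)) y) -> le x y).
    { intros x y H. apply disj_le; auto. apply NNPP. intro C.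
      destruct (AT _ C) as [a [Ha Hle]]. destruct (Hab a Ha) as [p [q [Hp [Hq ->]]]].
      set (pa := exist (fun p => atom p /\ le p one) p (proj1 (HP p) Hp) : X).
      set (qa := exist (fun p => atom p /\ le p one) q (proj1 (HP q) Hq) : X).
      assert (H1 : le (B p q) y).
      { apply (H pa qa). simpl. eapply le_trans; [exact Hle|apply le_infl]. }
      apply (Bnb p q Hp Hq). apply le_bot_eq. rewrite <- (inf_pc y). apply inf_glb; auto.
      eapply le_trans; [exact Hle|apply le_infr]. }
    intros x y H. apply le_antisym; apply Hle; intros; [|symmetry]; apply H.
  - intros x y a b. apply atom_sup. apply Hblk; auto.
  - intros x y a b. split. intro H; split; eapply le_trans; eauto using le_infl, le_infr.
    intros [H1 H2]. apply inf_glb; auto.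
  -
    intros x y [p Hp0] [q Hq0]. simpl.
    assert (Hp : In p P) by (apply HP; auto). assert (Hq : In q P) by (apply HP; auto).
    split.
    + intro H.
      assert (NZ : comp (comp p x) (comp one (comp y q)) <> bot).
      { rewrite comp_one_l. intro E. apply (Bnb p q Hp Hq). apply le_bot_eq.
        rewrite Bsand by auto. rewrite <- E.
        assert (E2 : comp (comp p x) (comp y q) = comp p (comp (comp x y) q)) by (rewrite !comp_assoc; reflexivity).
        rewrite E2. apply comp_mono_r, comp_mono_l, H. }
      rewrite Hone, bs_comp_l, bs_comp_r, map_map in NZ.
      destruct (bs_nonbot _ NZ) as [e [He Hne]].
      apply in_map_iff in He. destruct He as [r [<- Hr]].
      assert (E : comp (comp p x) (comp r (comp y q)) = comp (comp (comp p x) r) (comp (comp r y) q))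
        by (rewrite <- (Pidem r Hr) at 1; rewrite !comp_assoc; reflexivity).
      rewrite E in Hne.
      assert (N1 : comp (comp p x) r <> bot) by (intro Z; apply Hne; rewrite Z; apply comp_bot_l).
      assert (N2 : comp (comp r y) q <> bot) by (intro Z; apply Hne; rewrite Z; apply comp_bot_r).
      exists (exist (fun p => atom p /\ le p one) r (proj1 (HP r) Hr)). simpl. split.
      * assert (E1 : comp (comp p x) r = B p r)
          by (apply atom_le_atom; auto; unfold B; apply comp_mono_l, comp_mono_r, le_top).
        rewrite <- E1. apply le_trans with (comp (comp one x) one).
        apply comp_mono; [apply comp_mono_l|]; auto. rewrite comp_one_l, comp_one_r; apply le_refl.
      * assert (E1 : comp (comp r y) q = B r q)
          by (apply atom_le_atom; auto; unfold B; apply comp_mono_l, comp_mono_r, le_top).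
        rewrite <- E1. apply le_trans with (comp (comp one y) one).
        apply comp_mono; [apply comp_mono_l|]; auto. rewrite comp_one_l, comp_one_r; apply le_refl.
    + intros [[r Hr0] [H1 H2]]. simpl in *.
      assert (Hr : In r P) by (apply HP; auto).
      assert (E : comp (B p r) (B r q) = comp (comp p (comp (comp top (comp r r)) top)) q)
        by (unfold B; rewrite !comp_assoc; reflexivity).
      rewrite Pidem, (SI r (Pnb r Hr)) in E by auto.
      change (le (comp (comp p top) q) (comp x y)). rewrite <- E. apply comp_mono; auto.
  -
    intros x [p Hp0] [q Hq0]. simpl.
    assert (Hp : In p P) by (apply HP; auto). assert (Hq : In q P) by (apply HP; auto).
    split.
    + intro H. split; auto. intro H'. apply (Bnb p q Hp Hq). apply le_bot_eq.
      rewrite <- (inf_pc x). apply inf_glb; auto.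
    + intros [_ H]. apply pc_spec. apply atom_disj; auto.
  -
    intros x [p Hp0] [q Hq0]. simpl.
    assert (Hp : In p P) by (apply HP; auto). assert (Hq : In q P) by (apply HP; auto).
    split.
    + intro H. apply cnv_le in H. rewrite B_cnv in H; auto.
    + intro H. apply cnv_mono in H. rewrite B_cnv in H; auto.
  - intros [p Hp0] [q Hq0]. simpl.
    assert (Hp : In p P) by (apply HP; auto). assert (Hq : In q P) by (apply HP; auto).
    split; [|tauto]. intro H. apply (Bnb p q Hp Hq). apply le_bot_eq, H.
  - intros a b. split; auto. intros _. apply le_top.
  -
    intros [p Hp0] [q Hq0]. simpl.
    assert (Hp : In p P) by (apply HP; auto). assert (Hq : In q P) by (apply HP; auto).
    split.
    + intro H. split; auto. destruct (classic (p = q)) as [e|ne].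
      * subst. f_equal. apply proof_irrelevance.
      * exfalso. apply (Bnb p q Hp Hq). apply le_bot_eq. rewrite <- (Pdisj p q Hp Hq ne).
        eapply le_trans; [|apply sub_comp_le; auto]. rewrite Bsand by auto.
        apply comp_mono_r. apply le_trans with (comp one q); [apply comp_mono_l, H | rewrite comp_one_l; apply le_refl].
    + intros [e _]. injection e. intros <-.
      assert (E : p = B p p).
      { apply atom_le_atom; auto. rewrite <- (Pidem p Hp) at 1. rewrite <- (Pidem p Hp) at 1.
        unfold B. apply comp_mono_l, comp_mono_r, le_top. }
      rewrite <- E. auto.
Qed.

Arguments sup : clear implicits. Arguments inf : clear implicits.
Arguments comp : clear implicits. Arguments pc : clear implicits.
Arguments cnv : clear implicits. Arguments bot : clear implicits.
Arguments top : clear implicits. Arguments one : clear implicits.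
Arguments le : clear implicits. Arguments atom : clear implicits.

Theorem mainTheorem8 (S : StoneRA) (cnt : S -> natinf) :
  is_relation_algebra S ->
  atomic S ->
  simple_alg S ->
  finitely_many_atoms S ->
  cnt (bot S) = Fin 0 ->
  (forall x : S, atom S x -> cnt x = Fin 1) ->
  (forall x y : S, ni_add (cnt x) (cnt y) = ni_add (cnt (sup S x y)) (cnt (inf S x y))) ->
  cnt (top S) = ni_sq (cnt (one S)) ->
  atom_rectangular S /\ representable S.
Proof.
  exact (main_aux S cnt).
Qed.
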